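(* Let $m\ge 1$ and $n\ge 3$ be odd integers. Then there exists a $\Delta$-permutation $\psi$ of $\mathbb{Z}_m\times\mathbb{Z}_{2n}$ such that (1) $\Delta=[\,^{2mn-6}(1,0),\ ^{3}(2,0),\ ^{1}(0,2),\ ^{1}(0,n-2),\ ^{1}(0,n)]$, and (2) $\psi(0,0)=(0,n)$ and $\psi(0,n)=(0,n+2)$.
   Context: The notation $[\,^{\alpha_1}a_1,\ldots,\,^{\alpha_t}a_t]$ denotes the multiset containing $\alpha_i$ copies of $a_i$. A $v$-list of a group is a multiset of $v$ elements of the group. Given a group $\Gamma$ (written additively) of order $v$ and a $v$-list $\Delta$ of $\Gamma$, a permutation $\varphi$ of $\Gamma$ is a $\Delta$-permutation if the multiset $[\varphi(a)-a \mid a\in\Gamma]$ equals $\Delta$. *)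

(* Defs.v *)
From mathcomp Require Import all_boot all_order all_algebra all_fingroup.
Set Implicit Arguments. Unset Strict Implicit. Unset Printing Implicit Defensive.
Import GRing.Theory.
Local Open Scope ring_scope.

(* Z_k (k >= 1) is represented as 'I_(k.-1.+1), which carries MathComp's
   zmodType structure and is literally Z/kZ for k >= 1 (including k = 1). *)
Definition G (m n : nat) := ('I_(m.-1.+1) * 'I_((2 * n)%N.-1.+1))%type.

Definition elt (m n a b : nat) : G m n := (inZp a, inZp b).

(* A v-list is represented as a sequence (a multiset up to perm_eq).
   phi is a Delta-permutation iff the multiset [phi(a) - a | a in Gamma]
   equals Delta. *)
Definition is_Delta_perm (m n : nat) (phi : {perm G m n}) (Delta : seq (G m n)) :=
  perm_eq [seq phi a - a | a : G m n] Delta.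

Definition Delta3 (m n : nat) : seq (G m n) :=
  nseq (2 * m * n - 6) (elt m n 1 0) ++ nseq 3 (elt m n 2 0)
  ++ [:: elt m n 0 2; elt m n 0 (n - 2); elt m n 0 n].

(* Main.v *)
Require Import Defs.
From mathcomp Require Import all_boot all_order all_algebra all_fingroup zify.
Import GRing.Theory.
Local Open Scope ring_scope.
Lemma perm_split (T : finType) (V : eqType) (f : T -> V) (s : seq T) e :
  uniq s -> (forall p, p \notin s -> f p = e) ->
  perm_eq [seq f p | p : T] (map f s ++ nseq (#|T| - size s) e).
Proof.
move=> us hf.
have P1 : perm_eq (enum T) ([seq x <- enum T | x \in s] ++ [seq x <- enum T | x \notin s]).
  by rewrite perm_sym (perm_filterC (mem s)).
have P2 : perm_eq [seq x <- enum T | x \in s] s.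
  apply: uniq_perm; first exact: filter_uniq (enum_uniq T).
    by [].
  by move=> x; rewrite mem_filter mem_enum andbT.
have Hsz := perm_size P1; rewrite size_cat (perm_size P2) -cardT in Hsz.
have E : map f [seq x <- enum T | x \notin s] = nseq (#|T| - size s)%N e.
  rewrite Hsz addKn.
  elim: (enum T) => [|x l IH] //=.
  by case: ifP => //= hx; rewrite IH hf.
rewrite -E -map_cat.
have -> : [seq f p | p : T] = map f (enum T) by [].
apply: perm_map.
apply: (perm_trans P1).
by rewrite perm_cat2r.
Qed.
Lemma inZpD p (a b : nat) : inZp (a + b) = inZp a + inZp b :> 'I_p.+1.
Proof. apply: val_inj => /=. by rewrite modnDm. Qed.
Lemma inZp_eq p (a b : nat) : (a = b %[mod p.+1])%N -> inZp a = inZp b :> 'I_p.+1.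
Proof. by move=> h; apply: val_inj => /=. Qed.
Lemma inZp_sub p (a b c : nat) : (a = b + c %[mod p.+1])%N -> inZp a - inZp b = inZp c :> 'I_p.+1.
Proof. by move=> /inZp_eq ->; rewrite inZpD addrC addKr. Qed.
Lemma inZp0 p : inZp 0 = 0 :> 'I_p.+1.
Proof. by apply: val_inj => /=; rewrite mod0n. Qed.

Section Constr.
Variables (M N n : nat).
Hypothesis hN : N.+1 = (2 * n)%N.
Hypothesis hn : (3 <= n)%N.

Definition T := ('I_M.+1 * 'I_N.+1)%type.
Definition zn : 'I_N.+1 := inZp n.
Definition zn2 : 'I_N.+1 := inZp (n + 2).
Definition cc : {perm 'I_N.+1} := tperm 0 zn * tperm 0 zn2.
Definition SS (y : 'I_N.+1) := [|| y == 0, y == zn | y == zn2].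
Definition sh (x : 'I_M.+1) := x + inZp 1.
Definition aa (x : 'I_M.+1) := sh (tperm 0 (inZp M) x).

Definition Bf (p : T) : T := (p.1, if p.1 == 0 then cc p.2 else p.2).
Definition Af (p : T) : T := (if SS p.2 then aa p.1 else sh p.1, p.2).

Lemma Bf_inj : injective Bf.
Proof.
move=> [x y] [x' y'] [/= ex]; subst x'.
by case: ifP => _ // => [/perm_inj|] ->.
Qed.
Lemma sh_inj : injective sh. Proof. exact: addIr. Qed.
Lemma aa_inj : injective aa. Proof. by move=> x y /sh_inj /perm_inj. Qed.
Lemma Af_inj : injective Af.
Proof.
move=> [x y] [x' y'] [/= ex ey]; subst y'.
by move: ex; case: ifP => _ ; [move/aa_inj -> | move/sh_inj ->].
Qed.

Definition psi : {perm T} := perm Bf_inj * perm Af_inj.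

Lemma psiE p : psi p = Af (Bf p).
Proof. by rewrite permM !permE. Qed.

Lemma val_zn : val zn = n.
Proof. by rewrite /= modn_small // hN; lia. Qed.
Lemma val_zn2 : val zn2 = (n + 2)%N.
Proof. by rewrite /= modn_small // hN; lia. Qed.
Lemma zn_neq0 : zn != 0.
Proof. by apply/eqP => /(congr1 val); rewrite val_zn /=; lia. Qed.
Lemma zn2_neq0 : zn2 != 0.
Proof. by apply/eqP => /(congr1 val); rewrite val_zn2 /=; lia. Qed.
Lemma zn_neq2 : zn != zn2.
Proof. by apply/eqP => /(congr1 val); rewrite val_zn val_zn2; lia. Qed.

Lemma cc0 : cc 0 = zn.
Proof. by rewrite permM tpermL tpermD // eq_sym ?zn_neq0 ?zn_neq2. Qed.
Lemma ccn : cc zn = zn2.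
Proof. by rewrite permM tpermR tpermL. Qed.
Lemma ccn2 : cc zn2 = 0.
Proof.
rewrite permM [tperm 0 zn _]tpermD ?tpermR //; first by rewrite eq_sym zn2_neq0.
exact: zn_neq2.
Qed.
Lemma ccS y : ~~ SS y -> cc y = y.
Proof.
rewrite /SS !negb_or => /and3P[h1 h2 h3].
rewrite eq_sym in h1; rewrite eq_sym in h2; rewrite eq_sym in h3.
by rewrite permM !tpermD.
Qed.

Lemma pairB (a c : 'I_M.+1) (b d : 'I_N.+1) : (a, b) - (c, d) = (a - c, b - d) :> T.
Proof. by []. Qed.
Definition e1 : T := (inZp 1, inZp 0).
Definition e2 : T := (inZp 2, inZp 0).
Definition f p := psi p - p.

Lemma f_gen x y : ~~ ((x == 0) && SS y) -> ~~ ((x == inZp M) && SS y) -> f (x, y) = e1.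
Proof.
rewrite /f psiE /Bf /Af /= => h1 h2.
have -> : (if x == 0 then cc y else y) = y.
  by case: eqP h1 => //= _ /ccS.
rewrite /e1 inZp0 pairB subrr.
case: ifP h1 h2 => hS; rewrite ?andbT ?andbF // => h1 h2.
  by rewrite /aa tpermD 1?eq_sym // /sh addrC addKr.
by rewrite /sh addrC addKr.
Qed.

Lemma f_M y : M != 0%N -> SS y -> f (inZp M, y) = e2.
Proof.
move=> hM hS.
have hM0 : (inZp M : 'I_M.+1) != 0.
  by apply/eqP => /(congr1 val) /=; rewrite modn_small //; move/eqP: hM.
rewrite /f psiE /Bf /Af /= (negbTE hM0) hS /aa tpermR /sh /e2 add0r inZp0 pairB subrr.
congr pair; apply: inZp_sub.
by rewrite addn2 -[in RHS]addn1 modnDl.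
Qed.

Lemma SScc y : SS y -> SS (cc y).
Proof.
by rewrite /SS => /or3P[] /eqP ->; rewrite ?cc0 ?ccn ?ccn2 eqxx ?orbT.
Qed.

Lemma f0 y : SS y -> f (0, y) = (0, cc y - y).
Proof.
move=> hS; rewrite /f psiE /Bf /Af /= (SScc _ hS) pairB subr0 /aa tpermL /sh.
congr pair; rewrite -inZpD -inZp0; apply: inZp_eq.
by rewrite addn1 modnn mod0n.
Qed.

Lemma SS0 : SS 0. Proof. by rewrite /SS eqxx. Qed.
Lemma SSn : SS zn. Proof. by rewrite /SS eqxx orbT. Qed.
Lemma SSn2 : SS zn2. Proof. by rewrite /SS eqxx !orbT. Qed.

Lemma f_00 : f (0, 0) = (0, inZp n).
Proof. by rewrite f0 ?SS0 // cc0 subr0. Qed.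
Lemma f_0n : f (0, zn) = (0, inZp 2).
Proof. rewrite f0 ?SSn // ccn; congr pair; exact: inZp_sub. Qed.
Lemma f_0n2 : f (0, zn2) = (0, inZp (n - 2)).
Proof.
rewrite f0 ?SSn2 // ccn2; congr pair.
rewrite -inZp0; apply: inZp_sub.
rewrite hN (_ : (n + 2 + (n - 2) = 2 * n)%N) ?modnn ?mod0n //; lia.
Qed.
End Constr.
Theorem mainTheorem3 (m n : nat) :
  odd m -> (1 <= m)%N -> odd n -> (3 <= n)%N ->
  exists psi : {perm G m n},
    is_Delta_perm psi (Delta3 m n) /\
    psi (elt m n 0 0) = elt m n 0 n /\
    psi (elt m n 0 n) = elt m n 0 (n + 2).
Proof.
move=> _ hm _ hn.
set M := m.-1; set N := (2 * n).-1.
have hN : N.+1 = (2 * n)%N by rewrite /N prednK //; lia.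
have hmM : m = M.+1 by rewrite /M prednK.
exists (psi M N n).
have psif : forall p, psi M N n p = f M N n p + p by move=> p; rewrite /f subrK.
split; last split.
- rewrite /is_Delta_perm.
  change (perm_eq [seq f M N n a | a : T M N] (Delta3 m n)).
  have hsz : (2 * m * n - 6 = M.+1 * N.+1 - 6)%N by rewrite hN hmM; nia.
  rewrite /Delta3 hsz.
  case: (eqVneq M 0%N) => hM0.
  + set s := [:: (0, zn N n); (0, zn2 N n); (0, 0)] : seq (T M N).
    have us : uniq s.
      rewrite /s /= !inE !xpair_eqE !eqxx /= (negbTE (zn_neq0 _ _ hN hn)) (negbTE (zn_neq2 _ _ hN hn)).
      by rewrite (negbTE (zn2_neq0 _ _ hN hn)).
    have hf : forall p, p \notin s -> f M N n p = e1 M N.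
      move=> [x y] hp; apply: f_gen.
        apply/negP => /andP[/eqP hx]; rewrite /SS => /or3P[] /eqP hy; subst x y;
        by move: hp; rewrite !inE eqxx ?orbT.
      have -> : inZp M = 0 :> 'I_M.+1 by apply: val_inj; rewrite /= hM0.
      apply/negP => /andP[/eqP hx]; rewrite /SS => /or3P[] /eqP hy; subst x y;
      by move: hp; rewrite !inE eqxx ?orbT.
    apply: (perm_trans (@perm_split _ _ _ _ _ us hf)).
    rewrite card_prod !card_ord /= f_0n // f_0n2 // f_00 //.
    have he : elt m n 2 0 = e1 M N.
      by congr pair; apply: val_inj => /=; rewrite -/M hM0.
    have hK : (M.+1 * N.+1 - 3 = (M.+1 * N.+1 - 6) + 3)%N by rewrite hN; nia.
    rewrite he hK nseqD.
    change (perm_eq ([:: (0, inZp 2); (0, inZp (n - 2)); (0, inZp n)] ++ (nseq (M.+1 * N.+1 - 6) (e1 M N) ++ nseq 3 (e1 M N))) (nseq (M.+1 * N.+1 - 6) (e1 M N) ++ [:: e1 M N; e1 M N; e1 M N; elt m n 0 2; elt m n 0 (n - 2); elt m n 0 n])).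
    rewrite perm_catC -catA perm_cat2l /elt !inZp0.
    by [].
  + have hMz : (inZp M : 'I_M.+1) != 0.
      by apply/eqP => /(congr1 val) /=; rewrite modn_small //; move/eqP: hM0.
    set s := [:: (inZp M, 0); (inZp M, zn N n); (inZp M, zn2 N n);
                 (0, zn N n); (0, zn2 N n); (0, 0)] : seq (T M N).
    have us : uniq s.
      rewrite /s /= !inE !xpair_eqE !eqxx /= (negbTE (zn_neq0 _ _ hN hn)) (negbTE (zn_neq2 _ _ hN hn)).
      rewrite (negbTE (zn2_neq0 _ _ hN hn)) (negbTE hMz) eq_sym (negbTE (zn_neq0 _ _ hN hn)).
      by rewrite eq_sym (negbTE (zn2_neq0 _ _ hN hn)) eq_sym (negbTE (zn_neq2 _ _ hN hn)).
    have hf : forall p, p \notin s -> f M N n p = e1 M N.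
      move=> [x y] hp; apply: f_gen.
        apply/negP => /andP[/eqP hx]; rewrite /SS => /or3P[] /eqP hy; subst x y;
        by move: hp; rewrite !inE eqxx ?orbT.
      apply/negP => /andP[/eqP hx]; rewrite /SS => /or3P[] /eqP hy; subst x y;
      by move: hp; rewrite !inE eqxx ?orbT.
    apply: (perm_trans (@perm_split _ _ _ _ _ us hf)).
    rewrite card_prod !card_ord /= f_0n // f_0n2 // f_00 // !f_M //; try (exact: SS0 || exact: SSn || exact: SSn2).
    change (perm_eq ([:: e2 M N; e2 M N; e2 M N; (0, inZp 2); (0, inZp (n - 2)); (0, inZp n)] ++ nseq (M.+1 * N.+1 - 6) (e1 M N)) (nseq (M.+1 * N.+1 - 6) (e1 M N) ++ [:: e2 M N; e2 M N; e2 M N; elt m n 0 2; elt m n 0 (n - 2); elt m n 0 n])).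
    by rewrite perm_catC perm_cat2l /elt !inZp0.
- rewrite /elt !inZp0 psif f_00 //; congr pair; by rewrite ?addr0 ?inZp0.
- rewrite /elt !inZp0 psif -/(zn N n) f_0n //; congr pair; first by rewrite addr0.
  by rewrite addrC -inZpD.
Qed.
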